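(* Let $\mathcal{C}$ be a nonempty chordal $d$-uniform clutter on $[n]$ with multiset $\{N_1,\ldots,N_r\}$, let $N=\max\{N_1,\ldots,N_r\}$, and let $\Delta=\Delta(\mathcal{C})$ be its clique complex, with $\mathbf{h}$-vector $(h_i)$. Then \[ \sum_{i\ge0}h_it^i=\sum_{i=0}^{d-1}\binom{n}{i}t^i(1-t)^{N+d-i-1}+t^{d-1}\sum_{i=1}^r\Big((1-t)^{N-N_i}-(1-t)^{N}\Big). \]
   Context: A $d$-uniform clutter $\mathcal{C}$ on $[n]$ is a set of $d$-subsets of $[n]$. A $(d-1)$-subset $e$ is a submaximal circuit if $e\subset F$ for some $F\in\mathcal{C}$; $V\subseteq[n]$ is a clique if all $d$-subsets of $V$ lie in $\mathcal{C}$ (sets with fewer than $d$ elements are cliques); the clique complex $\Delta(\mathcal{C})$ consists of all cliques. $\mathrm{N}_{\mathcal{C}}(e)=\{c: e\cup\{c\}\in\mathcal{C}\}$, $\mathrm{N}_{\mathcal{C}}[e]=e\cup\mathrm{N}_{\mathcal{C}}(e)$; $e$ is simplicial if it is a submaximal circuit and $\mathrm{N}_{\mathcal{C}}[e]$ is a clique. $\mathcal{C}\setminus e=\{F\in\mathcal{C}:e\not\subset F\}$, and $\mathcal{C}_{e_1\cdots e_i}$ is successive deletion. A simplicial order is a sequence $e_1,\ldots,e_r$ with $e_i$ simplicial in $\mathcal{C}_{e_1\cdots e_{i-1}}$ (in $\mathcal{C}$ for $i=1$) and $\mathcal{C}_{e_1\cdots e_r}=\emptyset$; $\mathcal{C}$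 is chordal if one exists. The multiset of $\mathcal{C}$ is $\{N_1,\ldots,N_r\}$ with $N_i=|\mathrm{N}_{\mathcal{C}_{e_1\cdots e_{i-1}}}(e_i)|$ for a simplicial order (it does not depend on the order chosen). For a simplicial complex $\Delta$ on $[n]$ and a field $K$, the Stanley–Reisner ring $K[\Delta]=K[x_1,\ldots,x_n]/I_\Delta$, $I_\Delta=(\prod_{j\in F}x_j: F\notin\Delta)$, has Hilbert series $Q(t)/(1-t)^{\delta}$ with $\delta=\dim K[\Delta]$ and $Q(t)=\sum_{i=0}^{\delta}h_it^i$; $(h_0,\ldots,h_\delta)$ is the $\mathbf{h}$-vector of $\Delta$. *)

(* Defs.v *)
From mathcomp Require Import all_boot all_order all_algebra.
Set Implicit Arguments. Unset Strict Implicit. Unset Printing Implicit Defensive.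
Import GRing.Theory Num.Theory.

Section Clutter.
Variables (n d : nat).
Implicit Types (C : {set {set 'I_n}}) (e V : {set 'I_n}).

Definition uniform C : bool := [forall F in C, #|F| == d].

Definition is_clique C V : bool :=
  [forall F : {set 'I_n}, ((F \subset V) && (#|F| == d)) ==> (F \in C)].

Definition clique_complex C : {set {set 'I_n}} := [set V | is_clique C V].

Definition submax C e : bool :=
  (#|e| == d.-1) && [exists F in C, e \proper F].

Definition nbr C e : {set 'I_n} := [set c | (c |: e) \in C].
Definition cnbr C e : {set 'I_n} := e :|: nbr C e.

Definition simplicial C e : bool := submax C e && is_clique C (cnbr C e).

Definition cdelete C e : {set {set 'I_n}} := [set F in C | ~~ (e \subset F)].

Fixpoint simp_order C (es : seq {set 'I_n}) : bool :=
  match es with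
  | [::] => C == set0
  | e :: es' => simplicial C e && simp_order (cdelete C e) es'
  end.

Definition chordal C : Prop := exists es, simp_order C es.

Fixpoint mult_seq C (es : seq {set 'I_n}) : seq nat :=
  match es with
  | [::] => [::]
  | e :: es' => #|nbr C e| :: mult_seq (cdelete C e) es'
  end.
End Clutter.

Section StanleyReisner.
Variable n : nat.
Implicit Types (D : {set {set 'I_n}}).

(* Hilbert function of K[D]: K-dimension of the degree-k component, i.e. the
   number of monomials x^a of degree k whose support {j | a j != 0} is a face
   of D (standard monomial basis of the Stanley-Reisner ring; independent
   of the field K). *)
Definition sr_hilb D (k : nat) : nat :=
  #|[set a : {ffun 'I_n -> 'I_k.+1} |
       ((\sum_j (a j : nat)) == k) && ([set j | (a j : nat) != 0%N] \in D)]|.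

(* delta = dim K[D] = max cardinality of a face *)
Definition sr_dim D : nat := \max_(F in D) #|F|.

(* h-vector: coefficients of Q(t) = HS(t) * (1-t)^delta *)
Definition hvec D (i : nat) : int :=
  (\sum_(j < i.+1) (-1) ^+ j * ('C(sr_dim D, j))%:Z * (sr_hilb D (i - j))%:Z)%R.
End StanleyReisner.

(* Main.v *)
Require Import Defs.
From mathcomp Require Import all_boot all_order all_algebra.
From mathcomp Require Import ring.
Import GRing.Theory Num.Theory.
From mathcomp Require Import zify.
Import GRing.Theory Num.Theory.
Set Implicit Arguments. Unset Strict Implicit. Unset Printing Implicit Defensive.

Section PartB.
Variables (n d : nat).
Implicit Types (C : {set {set 'I_n}}) (e V S : {set 'I_n}).

Lemma is_cliqueP C V :
  reflect (forall F : {set 'I_n}, F \subset V -> #|F| = d -> F \in C) (is_clique d C V).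
Proof.
apply: (iffP forallP) => H F.
  by move=> FV Fd; move: (H F); rewrite FV Fd eqxx.
by apply/implyP => /andP [FV /eqP Fd]; apply: H.
Qed.

Lemma clique_sub C V (W : {set 'I_n}) : V \subset W -> is_clique d C W -> is_clique d C V.
Proof.
move=> VW /is_cliqueP H; apply/is_cliqueP => F FV; apply: H.
exact: subset_trans FV VW.
Qed.

Lemma clique_mono C (C' : {set {set 'I_n}}) V : C' \subset C -> is_clique d C' V -> is_clique d C V.
Proof.
move=> CC /is_cliqueP H; apply/is_cliqueP => F FV Fd.
by apply: (subsetP CC); apply: H.
Qed.

Lemma ex_dsubset V : d <= #|V| -> exists2 F : {set 'I_n}, F \subset V & #|F| = d.
Proof.
move=> dV.
have : 0 < #|[set A : {set 'I_n} | A \subset V & #|A| == d]|.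
  by rewrite cards_draws bin_gt0.
by case/card_gt0P => F; rewrite inE => /andP [FV /eqP Fd]; exists F.
Qed.

Lemma cdelete_sub C e : cdelete C e \subset C.
Proof. by apply/subsetP => F; rewrite inE => /andP []. Qed.

Lemma uniform_sub C (C' : {set {set 'I_n}}) : C' \subset C -> uniform d C -> uniform d C'.
Proof.
move=> CC /forallP H; apply/forallP => F; apply/implyP => FC.
by move/implyP: (H F); apply; apply: (subsetP CC).
Qed.

Lemma nbr_card C e (c : 'I_n) : uniform d C -> c \in nbr C e -> #|c |: e| = d.
Proof. by move=> /forallP uC; rewrite inE => Hc; move/implyP: (uC (c |: e)) => /(_ Hc) /eqP. Qed.

Lemma nbr_notin C e (c : 'I_n) : 0 < d -> uniform d C -> #|e| = d.-1 -> c \in nbr C e -> c \notin e.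
Proof.
move=> d0 uC ed Hc; have := nbr_card uC Hc; rewrite cardsU1 ed.
case: (c \in e) => /=; last by [].
by move=> h; lia.
Qed.

End PartB.

Section PartB2.
Variables (n : nat).
Open Scope ring_scope.

Lemma sum_subsets (R : nmodType) (f : nat -> R) (A : {set 'I_n}) :
  \sum_(S : {set 'I_n} | (S \subset A) && (S != set0)) f #|S| =
  \sum_(m < #|A|.+1 | (0 < m)%N) f m *+ 'C(#|A|, m).
Proof.
rewrite (partition_big (fun S : {set 'I_n} => (inord #|S| : 'I_#|A|.+1)) (fun m : 'I_#|A|.+1 => (0 < m)%N)) /=; last first.
  move=> S /andP [SA S0]; rewrite inordK ?card_gt0 //; exact: subset_leq_card SA.
apply: eq_bigr => m m0.
rewrite (eq_bigl (fun S => S \in [set S : {set 'I_n} | S \subset A & #|S| == m])); last first.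
  move=> S; rewrite inE; apply/idP/idP.
    case/andP => /andP [SA S0] /eqP <-; rewrite SA inordK ?eqxx //; exact: subset_leq_card SA.
  case/andP => SA /eqP Sm; rewrite SA -card_gt0 Sm m0 /=.
  by apply/eqP/val_inj; rewrite /= inordK // Sm.
rewrite (eq_bigr (fun _ => f m)); last by move=> S; rewrite inE => /andP [_ /eqP ->].
by rewrite sumr_const cards_draws.
Qed.

End PartB2.

Section PartB3.
Variables (n d : nat).
Implicit Types (C : {set {set 'I_n}}) (e V S : {set 'I_n}).

Lemma card_diff_pos V e : e \subset V -> #|e| < #|V| -> exists c, c \in V :\: e.
Proof.
move=> eV lt; apply/card_gt0P; rewrite cardsD (setIidPr eV); lia.
Qed.

Lemma clique_sum (R : nmodType) (w : nat -> R) C es :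
  0 < d -> uniform d C -> simp_order d C es ->
  (\sum_(V | is_clique d C V && (d <= #|V|)%N) w #|V| =
   \sum_(Ni <- mult_seq C es) \sum_(m < Ni.+1 | (0 < m)%N) w (m + d.-1)%N *+ 'C(Ni, m))%R.
Proof.
move=> d0; elim: es C => [|e es IH] C uC /=.
  move/eqP => ->; rewrite big_nil big1 // => V /andP [/is_cliqueP cl dV].
  by case: (ex_dsubset dV) => F FV Fd; move: (cl F FV Fd); rewrite inE.
case/andP => /andP [/andP [/eqP ed _] clN] so.
have uC' : uniform d (cdelete C e) by apply: uniform_sub uC; apply: cdelete_sub.
rewrite big_cons -(IH (cdelete C e)) //.
rewrite (bigID (fun V => e \subset V)) /=; congr (_ + _)%R; last first.
  apply: eq_bigl => V; apply/idP/idP.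
    case/andP => [/andP [cl dV] neV].
    apply/andP; split => //; apply/is_cliqueP => F FV Fd.
    rewrite inE (is_cliqueP _ _ _ cl F FV Fd) andTb; apply: contra neV => eF.
    exact: subset_trans eF FV.
  case/andP => [cl dV]; rewrite dV (clique_mono (cdelete_sub C e) cl) /=.
  apply/negP => eV.
  have [c cVe] : exists c, c \in V :\: e.
    apply: card_diff_pos => //.
    by rewrite ed; apply: leq_trans dV; rewrite prednK.
  move: cVe; rewrite inE => /andP [ce cV].
  have : c |: e \in cdelete C e.
    apply: (is_cliqueP _ _ _ cl).
      by rewrite subUset sub1set cV eV.
    by rewrite cardsU1 ce ed; lia.
  by rewrite inE subsetUr andbF.
have Hnot : forall c, c \in nbr C e -> c \notin e := fun c => nbr_notin d0 uC ed.
rewrite -(sum_subsets (fun k => w (k + d.-1)%N) (nbr C e)).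
rewrite (reindex_onto (fun S => e :|: S) (fun V => V :\: e)) /=; last first.
  move=> V /andP [_ eV]; apply/setP => x; rewrite !inE.
  by case xe: (x \in e) => //=; rewrite (subsetP eV).
have Hc : forall S, (is_clique d C (e :|: S) && (d <= #|e :|: S|)%N && (e \subset e :|: S))
     && ((e :|: S) :\: e == S) = (S \subset nbr C e) && (S != set0).
  move=> S; apply/idP/idP.
    case/andP => [/andP [/andP [cl dS] _] /eqP DS].
    apply/andP; split.
      apply/subsetP => c cS.
      have ce : c \notin e by move: cS; rewrite -DS !inE => /andP [].
      rewrite inE; apply: (is_cliqueP _ _ _ cl).
        by rewrite subUset sub1set inE cS orbT subsetUl.
      by rewrite cardsU1 ce ed; lia.
    apply: contraTneq dS => ->; rewrite setU0 ed -ltnNge; lia.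
  case/andP => SA S0.
  have dsj : forall c, c \in S -> c \notin e := fun c cS => Hnot c (subsetP SA c cS).
  have cardES : #|e :|: S| = (#|S| + d.-1)%N.
    rewrite cardsU.
    have -> : e :&: S = set0.
      apply/setP => c; rewrite !inE; case: (boolP (c \in S)) => cS.
        by rewrite (negbTE (dsj c cS)).
      by rewrite andbF.
    by rewrite cards0 subn0 ed addnC.
  rewrite cardES subsetUl andbT.
  have S1 : (0 < #|S|)%N by rewrite card_gt0.
  apply/andP; split; first (apply/andP; split).
  - by apply: clique_sub clN; rewrite /cnbr setUS.
  - lia.
  apply/eqP/setP => c; rewrite !inE; case: (boolP (c \in S)) => cS.
    by rewrite (negbTE (dsj c cS)) orbT.
  by case: (c \in e); rewrite ?orbF.
apply: eq_big => S; first exact: Hc.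
rewrite Hc => /andP [SA S0].
congr (w _); rewrite cardsU.
have -> : e :&: S = set0.
  apply/setP => c; rewrite !inE; case: (boolP (c \in S)) => cS.
    by rewrite (negbTE (Hnot c (subsetP SA c cS))).
  by rewrite andbF.
by rewrite cards0 subn0 ed addnC.
Qed.

End PartB3.

Lemma max_in (r : seq nat) : r != [::] -> \max_(x <- r) x \in r.
Proof.
elim: r => // x r IH _; rewrite big_cons inE.
case: (r =P [::]) => [->|/eqP rne]; first by rewrite big_nil maxn0 eqxx.
by rewrite /maxn; case: ltnP => _; rewrite ?(IH rne) ?orbT ?eqxx.
Qed.

Section PartC.
Variables (n d : nat).
Implicit Types (C : {set {set 'I_n}}) (e V S : {set 'I_n}).

Lemma simplicial_nbr_pos C e : 0 < d -> uniform d C -> simplicial d C e -> 0 < #|nbr C e|.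
Proof.
move=> d0 /forallP uC /andP [/andP [/eqP ed /existsP [F /andP [FC eF]]] _].
have Fd : #|F| = d by move/implyP: (uC F) => /(_ FC) /eqP.
have [c cFe] : exists c, c \in F :\: e.
  apply/card_gt0P; rewrite cardsD (setIidPr (proper_sub eF)).
  have := proper_card eF; lia.
move: cFe; rewrite inE => /andP [ce cF].
apply/card_gt0P; exists c; rewrite inE.
have -> : c |: e = F; last by [].
apply/eqP; rewrite eqEcard subUset sub1set cF (proper_sub eF) /= cardsU1 ce ed Fd.
lia.
Qed.

Lemma mult_seq_pos C es : 0 < d -> uniform d C -> simp_order d C es ->
  all (fun Ni => 0 < Ni) (mult_seq C es).
Proof.
move=> d0; elim: es C => [|e es IH] C uC //= /andP [sim so].
rewrite (simplicial_nbr_pos d0 uC sim) /=; apply: IH => //.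
apply/forallP => F; apply/implyP; rewrite inE => /andP [FC _].
by move/forallP: uC => /(_ F) /implyP; apply.
Qed.

Lemma size_mult_seq C es : size (mult_seq C es) = size es.
Proof. by elim: es C => //= e es IH C; rewrite IH. Qed.

End PartC.

Lemma sum_small_sets (R : nmodType) n d (g : nat -> R) : (0 < d)%N ->
  (\sum_(F : {set 'I_n} | (#|F| < d)%N) g #|F| = \sum_(k < d) g k *+ 'C(n, k))%R.
Proof.
case: d => // d _.
rewrite (partition_big (fun F : {set 'I_n} => (inord #|F| : 'I_d.+1)) xpredT) //=.
apply: eq_bigr => k _.
rewrite (eq_bigl (fun F => F \in [set F : {set 'I_n} | #|F| == k])); last first.
  move=> F; rewrite inE; apply/idP/idP.
    by case/andP => Fd /eqP <-; rewrite inordK.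
  move=> /eqP Fk; rewrite Fk ltn_ord /=; apply/eqP/val_inj; rewrite /= inordK //.
rewrite (eq_bigr (fun _ => g k)); last by move=> F; rewrite inE => /eqP ->.
by rewrite sumr_const card_draws card_ord.
Qed.
Local Open Scope ring_scope.

Lemma coef_1subX (m j : nat) :
  ((1 - 'X) ^+ m : {poly int})`_j = (-1) ^+ j * ('C(m, j))%:Z.
Proof.
elim: m j => [|m IH] j.
  by rewrite expr0 coef1 bin0n; case: j => [|j] //=; rewrite mulr0.
rewrite exprS mulrBl mul1r coefB IH coefXM.
case: j => [|j] /=.
  by rewrite subr0 !bin0.
rewrite IH binS exprS PoszD mulrDr.
by rewrite !mulN1r !mulNr.
Qed.

Section PartA.
Variable n : nat.
Implicit Types (D : {set {set 'I_n}}).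
Local Open Scope nat_scope.

Definition suppf K (a : {ffun 'I_n -> 'I_K}) : {set 'I_n} := [set j | (a j : nat) != 0%N].

Definition hilbK D K k :=
  #|[set a : {ffun 'I_n -> 'I_K.+1} | ((\sum_j (a j : nat)) == k) && (suppf a \in D)]|.

Lemma le_sum_ffun K (a : {ffun 'I_n -> 'I_K}) j : (a j <= \sum_i (a i : nat))%N.
Proof. by rewrite (bigD1 j) //= leq_addr. Qed.

Lemma sr_hilb_widen D k K : (k <= K)%N -> sr_hilb D k = hilbK D K k.
Proof.
move=> kK; have kK1 : (k.+1 <= K.+1)%N by [].
pose f (a : {ffun 'I_n -> 'I_k.+1}) : {ffun 'I_n -> 'I_K.+1} :=
  [ffun j => widen_ord kK1 (a j)].
have injf : injective f.
  move=> a b /ffunP eq_ab; apply/ffunP => j; move: (eq_ab j); rewrite !ffunE.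
  by move/(congr1 val) => /= /val_inj.
rewrite /sr_hilb /hilbK -(card_imset _ injf); apply: eq_card => b.
rewrite [RHS]inE; apply/imsetP/idP.
  move=> [a]; rewrite inE => /andP [Ha HD] ->.
  have -> : suppf (f a) = [set j | (a j : nat) != 0%N].
    by apply/setP => j; rewrite !inE ffunE.
  rewrite HD andbT; under eq_bigr do rewrite ffunE /=; by [].
move=> /andP [Hb HD].
have bk j : (b j < k.+1)%N by rewrite ltnS -(eqP Hb) le_sum_ffun.
exists [ffun j => inord (b j) : 'I_k.+1].
  rewrite inE; under eq_bigr do rewrite ffunE inordK //.
  rewrite Hb /=; congr (_ \in D): HD; apply/setP => j; rewrite !inE ffunE inordK //.
by apply/ffunP => j; rewrite !ffunE; apply/val_inj; rewrite /= inordK.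
Qed.
End PartA.

Section PartA2.
Variable n : nat.
Implicit Types (D : {set {set 'I_n}}).

Definition Hpoly D K : {poly int} :=
  \sum_(a : {ffun 'I_n -> 'I_K.+1} | suppf a \in D) 'X^(\sum_j (a j : nat)).

Lemma coef_Hpoly D K k : (Hpoly D K)`_k = (hilbK D K k)%:Z.
Proof.
rewrite /Hpoly coef_sum /hilbK.
under eq_bigr do rewrite coefXn.
rewrite -sum1_card -natz natr_sum [LHS]big_mkcond [RHS]big_mkcond /=.
apply: eq_bigr => a _; rewrite inE eq_sym.
by case: (suppf a \in D); case: (_ == k).
Qed.
End PartA2.

Section PartA3.
Variable n : nat.
Implicit Types (D : {set {set 'I_n}}).

Definition Tpoly K : {poly int} :=
  \sum_(v : 'I_K.+1) (if (v : nat) != 0%N then 'X^v else 0).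

Lemma Hpoly_faces D K : Hpoly D K = \sum_(F in D) Tpoly K ^+ #|F|.
Proof.
rewrite /Hpoly (partition_big (@suppf n K.+1) (fun F => F \in D)) //=.
apply: eq_bigr => F FD.
rewrite (eq_bigl (fun a => suppf a == F)); last first.
  by move=> a; case: eqP => [->|]; rewrite ?FD ?andbF.
pose G j (v : 'I_K.+1) : {poly int} :=
  if ((v : nat) != 0%N) == (j \in F) then 'X^v else 0.
have HG j : \sum_v G j v = if j \in F then Tpoly K else 1.
  rewrite /G; case: (j \in F).
    by apply: eq_bigr => v _; rewrite eqb_id.
  rewrite (bigD1 ord0) //= big1 ?addr0 // => v vn0.
  have -> : ((v : nat) != 0%N) = true by apply: contra vn0 => /eqP h; apply/eqP/val_inj.
  by [].
rewrite -prodr_const [RHS]big_mkcond /=.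
rewrite (eq_bigr (fun j => \sum_v G j v)); last by move=> j _; rewrite HG.
rewrite bigA_distr_bigA /= [LHS]big_mkcond /=.
apply: eq_bigr => a _; case: eqP => [eqF|neq].
  rewrite -prodrXr; apply: eq_bigr => j _.
  by rewrite /G -eqF inE eqxx.
have /existsP[j Hj] : [exists j, (j \in suppf a) != (j \in F)].
  apply: contraT; rewrite negb_exists => /forallP H; case: neq; apply/setP => j.
  by move: (H j); rewrite negbK => /eqP.
rewrite inE in Hj.
by rewrite (bigD1 j) //= /G (negbTE Hj) mul0r.
Qed.
End PartA3.

Lemma Tpoly_eq K : (1 - 'X) * Tpoly K = 'X * (1 - 'X^K).
Proof.
rewrite /Tpoly big_ord_recl /= add0r.
rewrite (eq_bigr (fun v : 'I_K => 'X * 'X^v)); last first.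
  by move=> v _; rewrite /bump /= add1n exprS.
rewrite -mulr_sumr mulrCA; congr (_ * _).
have := subrXX (1 : {poly int}) 'X K; rewrite expr1n => ->; congr (_ * _).
by apply: eq_bigr => v _; rewrite expr1n mul1r.
Qed.

Lemma one_subXn_pow (Y : {poly int}) s : exists q, (1 - Y) ^+ s = 1 - Y * q.
Proof.
elim: s => [|s [q IH]]; first by exists 0; rewrite expr0 mulr0 subr0.
exists (1 + q - Y * q); rewrite exprS IH; ring.
Qed.

Lemma coef_face (s dl i : nat) : (s <= dl)%N ->
  ((1 - 'X) ^+ dl * Tpoly i.+1 ^+ s)`_i = ('X^s * (1 - 'X) ^+ (dl - s) : {poly int})`_i.
Proof.
move=> sd; rewrite -(subnK sd) exprD -mulrA -exprMn Tpoly_eq exprMn addnK.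
have [q ->] := one_subXn_pow 'X^(i.+1) s.
have -> : (1 - 'X) ^+ (dl - s) * ('X ^+ s * (1 - 'X^(i.+1) * q)) =
  'X^s * (1 - 'X) ^+ (dl - s) - 'X^(i.+1) * ((1 - 'X) ^+ (dl - s) * 'X ^+ s * q) :> {poly int}.
  ring.
by rewrite coefB [X in _ - X]coefXnM ltnSn subr0.
Qed.

Lemma hvec_poly n (D : {set {set 'I_n}}) i :
  hvec D i = (\sum_(F in D) 'X^#|F| * (1 - 'X) ^+ (sr_dim D - #|F|) : {poly int})`_i.
Proof.
rewrite /hvec.
transitivity (((1 - 'X) ^+ sr_dim D * Hpoly D i.+1)`_i).
  rewrite coefM; apply: eq_bigr => j _.
  by rewrite coef_1subX coef_Hpoly -sr_hilb_widen // leqW // leq_subr.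
rewrite Hpoly_faces mulr_sumr !coef_sum; apply: eq_bigr => F FD; apply: coef_face.
exact: (@leq_bigmax_cond _ (fun F => F \in D) (fun F => #|F|) F FD).
Qed.

Theorem corollary2p3 (n d : nat) (C : {set {set 'I_n}}) (es : seq {set 'I_n}) :
  (0 < d)%N -> uniform d C -> C != set0 -> simp_order d C es ->
  let Ns := mult_seq C es in
  let N := (\max_(Ni <- Ns) Ni)%N in
  forall i : nat,
    hvec (clique_complex d C) i =
    (\sum_(k < d) ('C(n, k))%:R *: ('X^k * (1 - 'X) ^+ (N + d - k - 1))
     + 'X^(d.-1) * \sum_(Ni <- Ns) ((1 - 'X) ^+ (N - Ni) - (1 - 'X) ^+ N)
      : {poly int})`_i.
Proof.
move=> d0 uC C0 so Ns N i.
have Hall := mult_seq_pos d0 uC so.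
have Nsne : Ns != [::].
  rewrite -size_eq0 size_mult_seq; apply: contra C0 => /nilP es0.
  by move: so; rewrite es0.
have NinNs : (N \in Ns) := max_in Nsne.
have Npos : (0 < N)%N := allP Hall N NinNs.
have Nmax : forall Ni, Ni \in Ns -> (Ni <= N)%N.
  by move=> Ni H; apply: (@leq_bigmax_seq _ Ns xpredT id Ni H).
have ccE : forall F, (F \in clique_complex d C) = is_clique d C F.
  by move=> F; rewrite inE.
have dimE : sr_dim (clique_complex d C) = (N + d.-1)%N.
  apply/eqP; rewrite eqn_leq; apply/andP; split.
    apply/bigmax_leqP => F; rewrite ccE => clF.
    case: (ltnP #|F| d) => hF; first lia.
    have H := clique_sum (fun s => ((N + d.-1) < s)%N : nat) d0 uC so.
    rewrite [X in _ = X]big1_seq in H; last first.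
      move=> Ni /andP [_ NiIn]; apply: big1 => m _.
      move: (Nmax Ni NiIn) (ltn_ord m) => h1 h2.
      have -> : ((N + d.-1) < (m + d.-1))%N = false by apply/negbTE; lia.
      by rewrite mul0rn.
    rewrite (bigD1 F) /= in H; last by rewrite clF hF.
    have : (((N + d.-1) < #|F|)%N : nat) = 0%N.
      by move: H; case: ((N + d.-1) < #|F|)%N.
    by case: ltnP.
  have [V /andP [/andP [clV dV] /eqP VN]] :
      exists V, (is_clique d C V && (d <= #|V|)%N) && (#|V| == N + d.-1)%N.
    case: (pickP (fun V => (is_clique d C V && (d <= #|V|)%N) && (#|V| == N + d.-1)%N)) => [V HV|none].
      by exists V.
    have H := clique_sum (fun s => (s == N + d.-1)%N : nat) d0 uC so.
    rewrite big1 in H; last first.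
      by move=> V HV; move: (none V); rewrite HV /=; case: (_ == _).
    rewrite (big_rem N NinNs) /= (bigD1 ord_max) //= eqxx binn in H.
    by [].
  rewrite -VN; apply: (@leq_bigmax_cond _ (fun F => F \in clique_complex d C) (fun F => #|F|) V).
  by rewrite ccE.
rewrite hvec_poly dimE; apply: (congr1 (fun p : {poly int} => p`_i)).
rewrite (bigID (fun F : {set 'I_n} => (#|F| < d)%N)) /=; congr (_ + _).
  rewrite (eq_bigl (fun F : {set 'I_n} => (#|F| < d)%N)); last first.
    move=> F; rewrite ccE; case: (ltnP #|F| d) => hF; rewrite ?andbT ?andbF //.
    apply/is_cliqueP => F' F'F F'd; move: (subset_leq_card F'F); lia.
  rewrite (sum_small_sets n (fun k => 'X^k * (1 - 'X) ^+ (N + d.-1 - k)) d0).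
  apply: eq_bigr => k _; rewrite scaler_nat.
  have -> : (N + d - k - 1 = N + d.-1 - k)%N by move: (ltn_ord k); lia.
  by [].
rewrite (eq_bigl (fun F : {set 'I_n} => is_clique d C F && (d <= #|F|)%N)); last first.
  by move=> F; rewrite ccE -leqNgt.
rewrite (clique_sum (fun s => 'X^s * (1 - 'X) ^+ (N + d.-1 - s)) d0 uC so).
rewrite mulr_sumr big_seq [RHS]big_seq; apply: eq_bigr => Ni NiIn.
have NiN := Nmax Ni NiIn.
transitivity (\sum_(m < Ni.+1 | (0 < m)%N)
   'X^(d.-1) * (1 - 'X) ^+ (N - Ni) * (((1 - 'X) ^+ (Ni - m) * 'X^m) *+ 'C(Ni, m)) : {poly int}).
  apply: eq_bigr => m m0.
  have -> : (N + d.-1 - (m + d.-1) = (N - Ni) + (Ni - m))%N by move: (ltn_ord m); lia.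
  rewrite !exprD !mulrnAr; congr (_ *+ _).
  rewrite [_ * 'X^(d.-1)]mulrC -!mulrA; congr (_ * _); rewrite mulrCA; congr (_ * _); exact: mulrC.
rewrite -mulr_sumr.
have H1 := exprDn (1 - 'X : {poly int}) 'X Ni.
rewrite subrK expr1n (bigD1 ord0) //= subn0 expr0 mulr1 bin0 mulr1n in H1.
rewrite (eq_bigl (fun m : 'I_Ni.+1 => m != ord0)); last by move=> m; rewrite lt0n.
have -> : \sum_(m < Ni.+1 | m != ord0) (1 - 'X) ^+ (Ni - m) * 'X^m *+ 'C(Ni, m)
   = 1 - (1 - 'X) ^+ Ni :> {poly int}.
  set a := (1 - 'X) ^+ Ni in H1 *.
  set S := (\sum_(m < Ni.+1 | m != ord0) _) in H1 *.
  by rewrite H1 addrAC subrr add0r.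
have -> : (1 - 'X) ^+ N = (1 - 'X) ^+ (N - Ni) * (1 - 'X) ^+ Ni :> {poly int}.
  by rewrite -exprD subnK.
by rewrite -mulrA mulrBr mulr1.
Qed.
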